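(* Let $(\mathfrak g,\langle\cdot,\cdot\rangle)$ be a finite-dimensional real Lie algebra with a non-degenerate symmetric bilinear form which is ad-invariant, i.e. $\langle[X,Y],Z\rangle=-\langle Y,[X,Z]\rangle$ for all $X,Y,Z$, and which is flat, meaning the connection $\nabla_XY=\tfrac12[X,Y]$ has zero curvature (equivalently $\mathfrak g$ is nilpotent of class at most two). Then there exist an abelian Lie algebra $\mathfrak z$ with non-degenerate scalar product, a vector space $\mathfrak a$ and an alternating three-form $F\in\Lambda^3\mathfrak a^*$ such that $(\mathfrak g,\langle\cdot,\cdot\rangle)$ is isomorphic, as a metric Lie algebra, to the orthogonal direct product $(\mathfrak z,\langle\cdot,\cdot\rangle)\oplus(\mathfrak t_{\mathfrak a,F},\langle\cdot,\cdot\rangle_o)$.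
   Context: For a vector space $\mathfrak a$ and $F\in\Lambda^3\mathfrak a^*$, define $\omega_F:\mathfrak a\times\mathfrak a\to\mathfrak a^*$ by $\omega_F(u,v)(w)=F(u,v,w)$. The Lie algebra $\mathfrak t_{\mathfrak a,F}$ is the vector space $\mathfrak a^*\oplus\mathfrak a$ with bracket $[(\lambda,u),(\lambda',u')]=(\omega_F(u,u'),0)$. The scalar product $\langle\cdot,\cdot\rangle_o$ on $\mathfrak a^*\oplus\mathfrak a$ (of signature $(m,m)$, $m=\dim\mathfrak a$) is $\langle(\lambda,u),(\lambda',u')\rangle_o=\lambda(u')+\lambda'(u)$, so that $\mathfrak a$ and $\mathfrak a^*$ are totally isotropic. *)

(* Defs.v *)
(* Finite-dimensional spaces are modelled in coordinates:
   a vector space of dimension n is 'rV[R]_n. *)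
From HB Require Import structures.
From mathcomp Require Import all_boot all_order all_algebra.
Set Implicit Arguments. Unset Strict Implicit. Unset Printing Implicit Defensive.
Import Order.TTheory GRing.Theory Num.Theory.
Local Open Scope ring_scope.

Definition bilin (R : nzRingType) (n k : nat)
    (f : 'rV[R]_n -> 'rV[R]_n -> 'rV[R]_k) : Prop :=
  (forall (a : R) x y z, f (a *: x + y) z = a *: f x z + f y z) /\
  (forall (a : R) x y z, f z (a *: x + y) = a *: f z x + f z y).

Definition is_lie_bracket (R : nzRingType) (n : nat)
    (br : 'rV[R]_n -> 'rV[R]_n -> 'rV[R]_n) : Prop :=
  [/\ bilin br,
      (forall x, br x x = 0) &
      (forall x y z, br x (br y z) + br y (br z x) + br z (br x y) = 0)].

Definition bform (R : nzRingType) (n : nat) (B : 'M[R]_n) (x y : 'rV[R]_n) : R :=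
  (x *m B *m y^T) 0 0.

Definition nondeg_sym (R : comUnitRingType) (n : nat) (B : 'M[R]_n) : Prop :=
  B^T = B /\ B \in unitmx.

Definition ad_invariant (R : nzRingType) (n : nat) (B : 'M[R]_n)
    (br : 'rV[R]_n -> 'rV[R]_n -> 'rV[R]_n) : Prop :=
  forall x y z, bform B (br x y) z = - bform B y (br x z).

Definition nabla (R : fieldType) (n : nat)
    (br : 'rV[R]_n -> 'rV[R]_n -> 'rV[R]_n) (x y : 'rV[R]_n) : 'rV[R]_n :=
  (2%:R)^-1 *: br x y.

Definition curvature (R : fieldType) (n : nat)
    (br : 'rV[R]_n -> 'rV[R]_n -> 'rV[R]_n) (x y z : 'rV[R]_n) : 'rV[R]_n :=
  nabla br x (nabla br y z) - nabla br y (nabla br x z) - nabla br (br x y) z.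

Definition flat (R : fieldType) (n : nat)
    (br : 'rV[R]_n -> 'rV[R]_n -> 'rV[R]_n) : Prop :=
  forall x y z, curvature br x y z = 0.

Definition alt3 (R : nzRingType) (m : nat)
    (F : 'rV[R]_m -> 'rV[R]_m -> 'rV[R]_m -> R) : Prop :=
  [/\ (forall (a : R) x y v w, F (a *: x + y) v w = a * F x v w + F y v w),
      (forall (a : R) x y u w, F u (a *: x + y) w = a * F u x w + F u y w) &
      (forall (a : R) x y u v, F u v (a *: x + y) = a * F u v x + F u v y)] /\
  [/\ (forall u w, F u u w = 0),
      (forall u v, F u v v = 0) &
      (forall u v, F u v u = 0)].

(* The dual a^* of a = 'rV_m is identified with 'rV_m via the standard
   pairing  lambda(u) = (lambda *m u^T) 0 0. *)
Definition pair_dual (R : nzRingType) (m : nat) (lam u : 'rV[R]_m) : R :=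
  (lam *m u^T) 0 0.

(* omega_F(u,v) in a^*, i.e. the functional w |-> F(u,v,w) *)
Definition omegaF (R : nzRingType) (m : nat)
    (F : 'rV[R]_m -> 'rV[R]_m -> 'rV[R]_m -> R) (u v : 'rV[R]_m) : 'rV[R]_m :=
  \row_k F u v (delta_mx 0 k).

(* The orthogonal direct product z (+) t_{a,F}, where z = 'rV_p and
   t_{a,F} = a^* (+) a = 'rV_m (+) 'rV_m, realised as 'rV_(p + (m + m)):
   an element is row_mx z (row_mx lambda u). *)
Definition zpart (R : nzRingType) (p m : nat) (v : 'rV[R]_(p + (m + m))) : 'rV[R]_p :=
  lsubmx v.
Definition lampart (R : nzRingType) (p m : nat) (v : 'rV[R]_(p + (m + m))) : 'rV[R]_m :=
  lsubmx (rsubmx v).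
Definition upart (R : nzRingType) (p m : nat) (v : 'rV[R]_(p + (m + m))) : 'rV[R]_m :=
  rsubmx (rsubmx v).

Definition prod_bracket (R : nzRingType) (p m : nat)
    (F : 'rV[R]_m -> 'rV[R]_m -> 'rV[R]_m -> R)
    (v w : 'rV[R]_(p + (m + m))) : 'rV[R]_(p + (m + m)) :=
  row_mx 0 (row_mx (omegaF F (upart v) (upart w)) 0).

Definition prod_form (R : nzRingType) (p m : nat) (Bz : 'M[R]_p)
    (v w : 'rV[R]_(p + (m + m))) : R :=
  bform Bz (zpart v) (zpart w)
  + pair_dual (lampart v) (upart w) + pair_dual (lampart w) (upart v).

Definition metric_lie_iso (R : nzRingType) (n k : nat)
    (br1 : 'rV[R]_n -> 'rV[R]_n -> 'rV[R]_n) (f1 : 'rV[R]_n -> 'rV[R]_n -> R)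
    (br2 : 'rV[R]_k -> 'rV[R]_k -> 'rV[R]_k) (f2 : 'rV[R]_k -> 'rV[R]_k -> R)
    (phi : 'rV[R]_n -> 'rV[R]_k) : Prop :=
  [/\ (forall (a : R) x y, phi (a *: x + y) = a *: phi x + phi y),
      bijective phi,
      (forall x y, phi (br1 x y) = br2 (phi x) (phi y)) &
      (forall x y, f2 (phi x) (phi y) = f1 x y)].

(* Main.v *)
Require Import Defs.
From HB Require Import structures.
From mathcomp Require Import all_boot all_order all_algebra.
Import Order.TTheory GRing.Theory Num.Theory.
Local Open Scope ring_scope.
Set Implicit Arguments. Unset Strict Implicit.

Lemma lin_mx (R : fieldType) n k (f : 'rV[R]_n -> 'rV[R]_k)
  (hf : forall a x y, f (a *: x + y) = a *: f x + f y) (x : 'rV_n) :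
  f x = x *m \matrix_i f (delta_mx 0 i).
Proof.
have f0 : f 0 = 0.
  have h := hf 1 0 0; rewrite !scale1r addr0 in h.
  by apply: (addrI (f 0)); rewrite -h addr0.
have fD y z : f (y + z) = f y + f z.
  by rewrite -[y + z]/(y + z) -{1}[y]scale1r hf scale1r.
have fZ a y : f (a *: y) = a *: f y by rewrite -[a *: y]addr0 hf f0 addr0.
rewrite mulmx_sum_row; under eq_bigr => i _ do rewrite rowK.
rewrite {1}(row_sum_delta x).
by elim/big_rec2: _ => [|i y1 y2 _ <-]; rewrite ?f0 // fD fZ.
Qed.

Definition brL (R : fieldType) n (br : 'rV[R]_n -> 'rV[R]_n -> 'rV[R]_n) z : 'M_n :=
  \matrix_i br (delta_mx 0 i) z.
Definition brR (R : fieldType) n (br : 'rV[R]_n -> 'rV[R]_n -> 'rV[R]_n) z : 'M_n :=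
  \matrix_i br z (delta_mx 0 i).

Lemma brLE (R : fieldType) n (br : 'rV[R]_n -> 'rV[R]_n -> 'rV[R]_n) :
  is_lie_bracket br -> forall x z, br x z = x *m brL br z.
Proof. by case=> [[h1 h2] _ _] x z; exact: (@lin_mx _ _ _ (fun x => br x z) (fun a u v => h1 a u v z) x). Qed.

Lemma brRE (R : fieldType) n (br : 'rV[R]_n -> 'rV[R]_n -> 'rV[R]_n) :
  is_lie_bracket br -> forall x z, br z x = x *m brR br z.
Proof. by case=> [[h1 h2] _ _] x z; exact: (@lin_mx _ _ _ (fun x => br z x) (fun a u v => h2 a u v z) x). Qed.

Lemma br_anti (R : fieldType) n (br : 'rV[R]_n -> 'rV[R]_n -> 'rV[R]_n) :
  is_lie_bracket br -> forall x y, br x y = - br y x.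
Proof.
move=> hL x y; have := hL; case=> _ h0 _.
have := h0 (x + y); rewrite (brLE hL) mulmxDl -!(brLE hL) (brRE hL) mulmxDl.
rewrite -!(brRE hL) h0 add0r.
rewrite (brRE hL _ y) mulmxDl -!(brRE hL) h0 addr0 => /eqP.
by rewrite addr_eq0 => /eqP.
Qed.

Lemma flat_2step (R : realFieldType) n (br : 'rV[R]_n -> 'rV[R]_n -> 'rV[R]_n) :
  is_lie_bracket br -> flat br -> forall x y z, br (br x y) z = 0.
Proof.
move=> hL hF x y z; have := hL; case=> _ _ hJ.
have brZr c u w : br u (c *: w) = c *: br u w by rewrite (brRE hL) -scalemxAl -(brRE hL).
have brNr u w : br u (- w) = - br u w by rewrite (brRE hL) mulNmx -(brRE hL).
have J : br x (br y z) - br y (br x z) = br (br x y) z.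
  have := hJ x y z; rewrite (br_anti hL z x) brNr (br_anti hL z (br x y)).
  by move/eqP; rewrite subr_eq add0r => /eqP.
have := hF x y z; rewrite /curvature /nabla !brZr -!scalerBr J.
set w := br (br x y) z; set h := (2%:R)^-1 : R.
have h0 : h != 0 by rewrite invr_eq0 pnatr_eq0.
have h1 : h - 1 != 0.
  rewrite subr_eq0; apply/eqP => E.
  have : (2%:R : R) * h = 1 by rewrite mulfV // pnatr_eq0.
  by rewrite E mulr1 => /eqP; rewrite pnatr_eq1.
rewrite -{2}[w]scale1r -scalerBl => /eqP; rewrite !scaler_eq0 (negbTE h0) (negbTE h1).
by move/eqP.
Qed.

Definition Dsp (R : fieldType) n (br : 'rV[R]_n -> 'rV[R]_n -> 'rV[R]_n) : 'M_n :=
  (\sum_(j < n) brL br (delta_mx 0 j))%MS.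

Lemma br_in_D (R : fieldType) n (br : 'rV[R]_n -> 'rV[R]_n -> 'rV[R]_n) :
  is_lie_bracket br -> forall x y, (br x y <= Dsp br)%MS.
Proof.
move=> hL x y; rewrite (brRE hL) mulmx_sum_row; apply: summx_sub => j _.
apply: scalemx_sub; rewrite rowK (brLE hL).
by apply: (sumsmx_sup j) => //; apply: submxMl.
Qed.

Lemma D_gen (R : fieldType) n (br : 'rV[R]_n -> 'rV[R]_n -> 'rV[R]_n) k (K : 'M_(n, k)) :
  (forall x y, br x y *m K = 0) -> Dsp br *m K = 0.
Proof.
move=> hK; apply/sub_kermxP; apply/sumsmx_subP => j _; apply/sub_kermxP.
by apply/row_matrixP => i; rewrite row_mul rowK hK row0.
Qed.

Lemma sub_mul0 (R : fieldType) a b n k (A : 'M[R]_(a, n)) (D : 'M_(b, n)) (K : 'M_(n, k)) :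
  (A <= D)%MS -> D *m K = 0 -> A *m K = 0.
Proof. by move=> sAD DK; rewrite -(mulmxKpV sAD) -mulmxA DK mulmx0. Qed.

Lemma m11 (R : fieldType) (M : 'M[R]_1) : M 0 0 = 0 -> M = 0.
Proof. by move=> h; apply/matrixP => i j; rewrite !ord1 h mxE. Qed.

Lemma entry_delta (R : fieldType) n (r : 'rV[R]_n) k :
  (r *m (delta_mx (0 : 'I_1) k : 'rV[R]_n)^T) 0 0 = r 0 k.
Proof. by rewrite trmx_delta -colE mxE. Qed.

Lemma bform_sym (R : fieldType) n (B : 'M[R]_n) x y :
  B^T = B -> bform B x y = bform B y x.
Proof.
move=> hB; rewrite /bform.
have -> : (x *m B *m y^T) 0 0 = ((x *m B *m y^T)^T) 0 0 by rewrite [RHS]mxE.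
by rewrite !trmx_mul !trmxK hB mulmxA.
Qed.

Lemma bformNl (R : fieldType) n (B : 'M[R]_n) x y : bform B (- x) y = - bform B x y.
Proof. by rewrite /bform !mulNmx mxE. Qed.

Lemma bform0r (R : fieldType) n (B : 'M[R]_n) x : bform B x 0 = 0.
Proof. by rewrite /bform trmx0 mulmx0 mxE. Qed.

Lemma D_central (R : realFieldType) n (br : 'rV[R]_n -> 'rV[R]_n -> 'rV[R]_n) :
  is_lie_bracket br -> flat br -> forall d z, (d <= Dsp br)%MS -> br d z = 0.
Proof.
move=> hL hF d z hd; rewrite (brLE hL); apply: sub_mul0 hd _.
by apply: D_gen => x y; rewrite -(brLE hL); apply: flat_2step.
Qed.

Lemma D_iso (R : realFieldType) n (br : 'rV[R]_n -> 'rV[R]_n -> 'rV[R]_n) B :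
  is_lie_bracket br -> flat br -> B^T = B -> ad_invariant B br ->
  Dsp br *m B *m (Dsp br)^T = 0.
Proof.
move=> hL hF hB hI.
have a z w : Dsp br *m (B *m (br z w)^T) = 0.
  apply: D_gen => x y; apply: m11; rewrite mulmxA.
  change (bform B (br x y) (br z w) = 0); rewrite hI.
  have -> : br x (br z w) = 0 by rewrite br_anti // flat_2step // oppr0.
  by rewrite bform0r oppr0.
rewrite -mulmxA; apply: D_gen => x y.
by apply: trmx_inj; rewrite trmx0 !trmx_mul trmxK hB -mulmxA a.
Qed.

Lemma perp_central (R : realFieldType) n (br : 'rV[R]_n -> 'rV[R]_n -> 'rV[R]_n) B k
  (E : 'M_(k, n)) :
  is_lie_bracket br -> nondeg_sym B -> ad_invariant B br -> (Dsp br <= E)%MS ->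
  forall w y, w *m B *m E^T = 0 -> br w y = 0.
Proof.
move=> hL [hBs hBu] hI sDE w y hw.
suff h : br w y *m B = 0 by rewrite -(mulmxK hBu (br w y)) h mul0mx.
apply/rowP => j; rewrite [RHS]mxE -entry_delta.
change (bform B (br w y) (delta_mx 0 j) = 0).
rewrite br_anti // bformNl hI opprK.
have /submxP [c ->] : (br y (delta_mx 0 j) <= E)%MS.
  by apply: submx_trans sDE; apply: br_in_D.
by rewrite /bform trmx_mul mulmxA hw mul0mx mxE.
Qed.

Lemma half_half (R : realFieldType) : (2%:R : R)^-1 + (2%:R)^-1 = 1.
Proof.
have h2 : (2%:R : R) != 0 by rewrite pnatr_eq0.
by rewrite -[X in X + _]mul1r -[X in _ + X]mul1r -mulrDl mulfV.
Qed.

Lemma witt (R : realFieldType) n m (B : 'M[R]_n) (Dm : 'M_(m, n)) :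
  B^T = B -> B \in unitmx -> row_free Dm -> Dm *m B *m Dm^T = 0 ->
  exists A : 'M_(m, n), Dm *m B *m A^T = 1%:M /\ A *m B *m A^T = 0.
Proof.
move=> hB hBu hDf e3.
have : row_free (Dm *m B) by rewrite /row_free mxrankMfree ?row_free_unit.
case/row_freeP => A0t e1.
set A0 := A0t^T; set S := A0 *m B *m A0^T; set h := (2%:R : R)^-1.
have e1' : Dm *m B *m A0^T = 1%:M by rewrite trmxK.
have e2 : A0 *m B *m Dm^T = 1%:M.
  by apply: trmx_inj; rewrite !trmx_mul trmxK hB mulmxA e1' trmx1.
have e4 : S^T = S by rewrite /S !trmx_mul trmxK hB mulmxA.
exists (A0 - h *: (S *m Dm)).
have eT : (A0 - h *: (S *m Dm))^T = A0^T - h *: (Dm^T *m S).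
  by rewrite linearB /= linearZ /= trmx_mul e4.
have f1 : Dm *m B *m (A0 - h *: (S *m Dm))^T = 1%:M.
  by rewrite eT mulmxBr -scalemxAr mulmxA e3 mul0mx scaler0 subr0 e1'.
split => //.
rewrite mulmxBl mulmxBl -scalemxAl -scalemxAl.
rewrite -[S *m Dm *m B]mulmxA -[S *m (Dm *m B) *m _]mulmxA f1 mulmx1.
rewrite eT mulmxBr -scalemxAr !mulmxA e2 mul1mx.
rewrite -/S.
by rewrite -addrA -opprD -scalerDl half_half scale1r subrr.
Qed.

Lemma complement (R : realFieldType) n m (B : 'M[R]_n) (Dm A : 'M_(m, n)) :
  B^T = B -> Dm *m B *m Dm^T = 0 -> Dm *m B *m A^T = 1%:M -> A *m B *m A^T = 0 ->
  exists p (Z : 'M_(p, n)) (X : 'M_(n, p)),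
    [/\ row_mx X (row_mx (B *m A^T) (B *m Dm^T)) *m col_mx Z (col_mx Dm A) = 1%:M,
        col_mx Z (col_mx Dm A) *m row_mx X (row_mx (B *m A^T) (B *m Dm^T)) = 1%:M,
        Z *m B *m Dm^T = 0, Z *m B *m A^T = 0 & Dm *m X = 0].
Proof.
move=> hB e3 e1 e5.
have e6 : A *m B *m Dm^T = 1%:M.
  by apply: trmx_inj; rewrite !trmx_mul trmxK hB mulmxA e1 trmx1.
have r1 : Dm *m (B *m A^T) = 1%:M by rewrite mulmxA.
have r3 : Dm *m (B *m Dm^T) = 0 by rewrite mulmxA.
have r5 : A *m (B *m A^T) = 0 by rewrite mulmxA.
have r6 : A *m (B *m Dm^T) = 1%:M by rewrite mulmxA.
pose Pi := 1%:M - B *m A^T *m Dm - B *m Dm^T *m A.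
have DP : Dm *m Pi = 0.
  by rewrite /Pi !mulmxBr mulmx1 !mulmxA e1 e3 mul1mx mul0mx subrr subr0.
have AP : A *m Pi = 0.
  by rewrite /Pi !mulmxBr mulmx1 !mulmxA e5 e6 mul0mx mul1mx subr0 subrr.
have PBA : Pi *m (B *m A^T) = 0.
  by rewrite /Pi !mulmxBl mul1mx -!mulmxA r1 r5 mulmx0 mulmx1 mulmx0 subrr subr0.
have PBD : Pi *m (B *m Dm^T) = 0.
  by rewrite /Pi !mulmxBl mul1mx -!mulmxA r3 r6 mulmx0 mulmx1 mulmx0 subr0 subrr.
have PP : Pi *m Pi = Pi.
  rewrite {2}/Pi !mulmxBr mulmx1 !mulmxA.
  rewrite -[Pi *m B *m A^T]mulmxA PBA -[Pi *m B *m Dm^T]mulmxA PBD.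
  by rewrite !mul0mx !subr0.
pose Z := row_base Pi.
have sZP : (Z <= Pi)%MS by rewrite eq_row_base.
have sPZ : (Pi <= Z)%MS by rewrite eq_row_base.
have ZPi : Z *m Pi = Z by rewrite -{1}(mulmxKpV sZP) -mulmxA PP mulmxKpV.
exists (\rank Pi), Z, (Pi *m pinvmx Z).
have ZBA : Z *m B *m A^T = 0.
  by rewrite -ZPi -!mulmxA PBA !mulmx0.
have ZBD : Z *m B *m Dm^T = 0 by rewrite -ZPi -!mulmxA PBD !mulmx0.
split => //; last by rewrite mulmxA DP mul0mx.
  rewrite !mul_row_col (mulmxKpV sPZ) /Pi.
  by rewrite -!mulmxA (addrC (B *m (A^T *m Dm))) addrA subrK subrK.
rewrite mul_col_row mul_mx_row mul_col_mx mul_col_row.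
rewrite [Z *m (Pi *m _)]mulmxA ZPi mulmxVp ?row_base_free // !mulmxA ZBA ZBD DP AP !mul0mx.
rewrite e1 e3 e5 e6 row_mx0 col_mx0.
by rewrite -!scalar_mx_block.
Qed.

Lemma add00 (R : fieldType) a b (M N : 'M[R]_(a, b)) i j :
  (M + N) i j = M i j + N i j.
Proof. by rewrite mxE. Qed.

Lemma bformDl (R : fieldType) n (B : 'M[R]_n) x y z :
  bform B (x + y) z = bform B x z + bform B y z.
Proof. by rewrite /bform !mulmxDl mxE. Qed.
Lemma bformZl (R : fieldType) n (B : 'M[R]_n) a x z :
  bform B (a *: x) z = a * bform B x z.
Proof. by rewrite /bform -!scalemxAl mxE. Qed.
Lemma bformDr (R : fieldType) n (B : 'M[R]_n) x y z :
  bform B z (x + y) = bform B z x + bform B z y.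
Proof. by rewrite /bform linearD /= mulmxDr mxE. Qed.
Lemma bformZr (R : fieldType) n (B : 'M[R]_n) a x z :
  bform B z (a *: x) = a * bform B z x.
Proof. by rewrite /bform linearZ /= -scalemxAr mxE. Qed.
Lemma bform0l (R : fieldType) n (B : 'M[R]_n) x : bform B 0 x = 0.
Proof. by rewrite /bform !mul0mx mxE. Qed.

Lemma pd_sym (R : fieldType) n (a b : 'rV[R]_n) : (a *m b^T) 0 0 = (b *m a^T) 0 0.
Proof.
have -> : (a *m b^T) 0 0 = ((a *m b^T)^T) 0 0 by rewrite [RHS]mxE.
by rewrite trmx_mul trmxK.
Qed.

Lemma bform_brr (R : realFieldType) n (br : 'rV[R]_n -> 'rV[R]_n -> 'rV[R]_n) B :
  B^T = B -> ad_invariant B br -> forall x y, bform B (br x y) y = 0.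
Proof.
move=> hB hI x y; have := hI x y y; rewrite (bform_sym _ _ hB) => /eqP.
rewrite -addr_eq0 -mulr2n -mulr_natl mulf_eq0 pnatr_eq0 /=.
by rewrite (bform_sym _ _ hB) => /eqP.
Qed.

Theorem mainTheorem17 (R : realFieldType) (n : nat)
    (br : 'rV[R]_n -> 'rV[R]_n -> 'rV[R]_n) (B : 'M[R]_n) :
  is_lie_bracket br -> nondeg_sym B -> ad_invariant B br -> flat br ->
  exists (p m : nat) (Bz : 'M[R]_p)
         (F : 'rV[R]_m -> 'rV[R]_m -> 'rV[R]_m -> R)
         (phi : 'rV[R]_n -> 'rV[R]_(p + (m + m))),
    [/\ nondeg_sym Bz, alt3 F &
        metric_lie_iso br (bform B) (prod_bracket F) (prod_form Bz) phi].
Proof.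
move=> hL hB hI hF; have [hBs hBu] := hB.
pose D := Dsp br; pose Dm := row_base D.
have hDf : row_free Dm by apply: row_base_free.
have sDmD : (Dm <= D)%MS by rewrite eq_row_base.
have sDDm : (D <= Dm)%MS by rewrite eq_row_base.
clearbody Dm.
have e3 : Dm *m B *m Dm^T = 0.
  have s1 : D *m (B *m D^T) = 0 by rewrite mulmxA; apply: D_iso.
  have s2 : Dm *m (B *m D^T) = 0 by apply: sub_mul0 sDmD s1.
  have s3 : D *m (B *m Dm^T) = 0.
    by apply: trmx_inj; rewrite trmx0 !trmx_mul trmxK hBs -mulmxA s2.
  by rewrite -mulmxA; apply: sub_mul0 sDmD s3.
have [A [e1 e5]] := witt hBs hBu hDf e3.
have e6 : A *m B *m Dm^T = 1%:M.
  by apply: trmx_inj; rewrite !trmx_mul trmxK hBs mulmxA e1 trmx1.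
have [p [Z [X [PQ QP ZBD ZBA DX]]]] := complement hBs e3 e1 e5.
set P := row_mx X (row_mx (B *m A^T) (B *m Dm^T)) in PQ QP.
set Q := col_mx Z (col_mx Dm A) in PQ QP.
pose H : 'M[R]_(\rank D + \rank D) := block_mx 0 1%:M 1%:M 0.
have QBQ : Q *m B *m Q^T = block_mx (Z *m B *m Z^T) 0 0 H.
  rewrite /Q !tr_col_mx mul_col_mx (mul_col_row (Z *m B)).
  have DBZ : Dm *m B *m Z^T = 0.
    by apply: trmx_inj; rewrite !trmx_mul trmxK hBs mulmxA ZBD trmx0.
  have ABZ : A *m B *m Z^T = 0.
    by apply: trmx_inj; rewrite !trmx_mul trmxK hBs mulmxA ZBA trmx0.
  rewrite mul_mx_row !mul_col_mx !mul_mx_row.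
  by rewrite ZBD ZBA DBZ ABZ e1 e3 e5 e6 row_mx0 col_mx0.
pose F (u v w : 'rV[R]_(\rank D)) := bform B (br (u *m A) (v *m A)) (w *m A).
exists p, (\rank D), (Z *m B *m Z^T), F, (fun x => x *m P).
have brDl u v w : br (u + v) w = br u w + br v w by rewrite !(brLE hL _ w) mulmxDl.
have brZl a u w : br (a *: u) w = a *: br u w by rewrite !(brLE hL _ w) scalemxAl.
have brDr u v w : br w (u + v) = br w u + br w v by rewrite !(brRE hL _ w) mulmxDl.
have brZr a u w : br w (a *: u) = a *: br w u by rewrite !(brRE hL _ w) scalemxAl.
split.
- split; first by rewrite !trmx_mul trmxK hBs mulmxA.
  have : Q *m B *m Q^T *m (P^T *m invmx B *m P) = 1%:M.
    rewrite !mulmxA -[Q *m B *m Q^T *m P^T]mulmxA -trmx_mul PQ trmx1 mulmx1.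
    by rewrite mulmxK // QP.
  case/mulmx1_unit => + _; rewrite QBQ unitmxE det_ublock unitrM => /andP[].
  by rewrite -unitmxE.
- split; first split.
  + by move=> a u v w z; rewrite /F mulmxDl -scalemxAl brDl brZl bformDl bformZl.
  + by move=> a u v w z; rewrite /F mulmxDl -scalemxAl brDr brZr bformDl bformZl.
  + by move=> a u v w z; rewrite /F mulmxDl -scalemxAl bformDr bformZr.
  + split.
    * by move=> u w; rewrite /F; case: hL => _ -> _; rewrite bform0l.
    * by move=> u v; rewrite /F bform_brr.
    * by move=> u v; rewrite /F br_anti // bformNl bform_brr // oppr0.
split.
- by move=> a x y; rewrite mulmxDl scalemxAl.
- by exists (fun y => y *m Q) => x; rewrite -mulmxA ?PQ ?QP mulmx1.
- move=> x y.
  have cen w z : w *m B *m Dm^T = 0 -> br w z = 0 by apply: perp_central hL hB hI sDDm w z.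
  have e6r : A *m (B *m Dm^T) = 1%:M by rewrite mulmxA.
  have red u : (u - (u *m (B *m Dm^T)) *m A) *m B *m Dm^T = 0.
    by rewrite !mulmxBl -!mulmxA e6r mulmx1 subrr.
  have brxy : br x y = br ((x *m (B *m Dm^T)) *m A) ((y *m (B *m Dm^T)) *m A).
    rewrite {1}(_ : x = (x - (x *m (B *m Dm^T)) *m A) + (x *m (B *m Dm^T)) *m A);
      last by rewrite subrK.
    rewrite brDl cen ?red // add0r.
    rewrite {1}(_ : y = (y - (y *m (B *m Dm^T)) *m A) + (y *m (B *m Dm^T)) *m A);
      last by rewrite subrK.
    by rewrite brDr (br_anti hL _ (y - _)) cen ?red // oppr0 add0r.
  have /submxP [k hk] := submx_trans (br_in_D hL x y) sDDm.
  rewrite /P /prod_bracket /upart !mul_mx_row !row_mxKr.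
  rewrite (_ : br x y *m X = 0); last by rewrite hk -mulmxA DX mulmx0.
  rewrite (_ : br x y *m (B *m Dm^T) = 0); last first.
    by rewrite hk -mulmxA [Dm *m _]mulmxA e3 mulmx0.
  congr (row_mx 0 (row_mx _ 0)).
  rewrite brxy; apply/rowP => j; rewrite /omegaF [RHS]mxE /F /bform trmx_mul.
  by rewrite !mulmxA entry_delta.
- move=> x y.
  have -> : bform B x y = (x *m P *m (Q *m B *m Q^T) *m (y *m P)^T) 0 0.
    rewrite /bform [(y *m P)^T]trmx_mul !mulmxA.
    rewrite -[x *m P *m Q *m B *m Q^T *m P^T]mulmxA -trmx_mul PQ trmx1 mulmx1.
    by rewrite -[x *m P *m Q]mulmxA PQ mulmx1.
  rewrite QBQ /P /H !mul_mx_row !tr_row_mx !mul_row_block !mul_row_col.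
  rewrite !mulmx0 !mulmx1 !addr0 !add0r mul_row_col.
  rewrite /prod_form /zpart /lampart /upart !row_mxKr !row_mxKl.
  rewrite /bform /pair_dual !add00 (pd_sym (x *m (B *m Dm^T))).
  by rewrite -addrA [X in _ + X]addrC.
Qed.
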